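(* Let $q,q',n$ be integers with $q'\ge 2q+2$, $q>1$ and $n>1$. Let $S$ be an $\mathcal{OS}_q(n)$ of period $m$ with ring sequence $[s_0,\ldots,s_{m-1}]$ where $s_0=0$; for $x\in\mathbb{Z}_q$ let $x'$ denote the class in $\mathbb{Z}_{q'}$ of the integer in $\{0,\ldots,q-1\}$ representing $x$; define $t_i=(-1)^{i+m-1}s_i'$ if $s_i'\neq0$ and $t_i=(-1)^{i+m-1}q$ if $s_i'=0$; and let $U$ be the sequence over $\mathbb{Z}_{q'}$ of period $4m$ with ring sequence $[s_0',\ldots,s_{m-1}',-s_0',\ldots,-s_{m-1}',t_0,\ldots,t_{m-1},-t_0,\ldots,-t_{m-1}]$ (an $\mathcal{SOS}_{q'}(n)$ containing an even number of zeros in its ring sequence). Let $U'$ be obtained from $U$ by replacing half of the zeros in its ring sequence by $q+1$ and the other half by $q'-q-1$. Then $U'$ is a good $\mathcal{SOS}_{q'}(n)$ of the same period as $U$, and $w_{q'}(U')=0$.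
   Context: For a periodic sequence $S=(s_i)$ write $\mathbf{s}_n(i)=(s_i,\ldots,s_{i+n-1})$; $\mathbf{u}^R$ is the reverse of a tuple and $-\mathbf{u}$ its termwise negative. An $n$-window sequence of period $m$ satisfies $\mathbf{s}_n(i)=\mathbf{s}_n(j)\Rightarrow i\equiv j\pmod m$. An $\mathcal{OS}_q(n)$ is a $q$-ary $n$-window sequence with $\mathbf{s}_n(i)\neq\mathbf{s}_n(j)^R$ for all $i,j$; an $\mathcal{SOS}_q(n)$ is an $\mathcal{OS}_q(n)$ with also $\mathbf{s}_n(i)\neq-\mathbf{s}_n(j)^R$ for all $i,j$. Such a sequence is good if every run of consecutive $0$s has length at most $n-2$. The ring sequence of a sequence of period $m$ is one period. The weight $w(U)$ is the integer sum of one period with terms in $\{0,\ldots,q'-1\}$; $w_{q'}(U)=w(U)\bmod q'$. *)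

(* Defs.v *)
(* Periodic sequences are represented by their ring sequence
   (one period) [r : seq nat]; the i-th term of the periodic sequence is
   [nth 0 r (i %% size r)]. Elements of Z_q are represented by their
   representative in {0,...,q-1}. *)
From mathcomp Require Import all_boot.
Set Implicit Arguments. Unset Strict Implicit. Unset Printing Implicit Defensive.

Definition term (r : seq nat) (i : nat) : nat := nth 0 r (i %% size r).

Definition window (r : seq nat) (n i : nat) : seq nat :=
  mkseq (fun k => term r (i + k)) n.

Definition negq (q x : nat) : nat := (q - x) %% q.

Definition qary (q : nat) (r : seq nat) : Prop := all (fun x => x < q) r.

Definition window_seq (n : nat) (r : seq nat) : Prop :=
  0 < size r /\
  forall i j, window r n i = window r n j -> i = j %[mod size r].

Definition OS (q n : nat) (r : seq nat) : Prop :=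
  [/\ qary q r, window_seq n r &
      forall i j, window r n i <> rev (window r n j)].

Definition SOS (q n : nat) (r : seq nat) : Prop :=
  OS q n r /\ forall i j, window r n i <> map (negq q) (rev (window r n j)).

(* good: every run of consecutive 0s has length at most n-2,
   i.e. no n-1 consecutive terms are all 0 *)
Definition good (n : nat) (r : seq nat) : Prop :=
  forall i, ~~ all (fun x => x == 0) (window r n.-1 i).

Definition weight (r : seq nat) : nat := sumn r.
Definition weight_mod (q' : nat) (r : seq nat) : nat := weight r %% q'.

Definition sgn_mul (q' e x : nat) : nat := if odd e then negq q' x else x %% q'.

Definition t_term (q q' : nat) (s : seq nat) (i : nat) : nat :=
  let m := size s in
  let si := nth 0 s i in
  if si != 0 then sgn_mul q' (i + m - 1) si else sgn_mul q' (i + m - 1) q.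

Definition U_ring (q q' : nat) (s : seq nat) : seq nat :=
  let t := [seq t_term q q' s i | i <- iota 0 (size s)] in
  s ++ map (negq q') s ++ t ++ map (negq q') t.

Definition half_replacement (q q' : nat) (U U' : seq nat) : Prop :=
  size U' = size U /\
  exists A : seq nat,
    [/\ uniq A,
        {in A, forall i, i < size U /\ nth 0 U i = 0},
        (size A).*2 = count (fun x => x == 0) U &
        forall i, i < size U ->
          nth 0 U' i = if nth 0 U i != 0 then nth 0 U i
                       else if i \in A then q.+1 else q' - q.+1].

(* Main.v *)
Require Import Defs.
From mathcomp Require Import all_boot zify.
Set Implicit Arguments. Unset Strict Implicit. Unset Printing Implicit Defensive.

Definition st q (s : seq nat) j := if nth 0 s j == 0 then q else nth 0 s j.
Definition ee (s : seq nat) j := odd (j + size s - 1).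
Definition Uf q q' (s : seq nat) b j := match b with
 | 0 => nth 0 s j
 | 1 => if nth 0 s j == 0 then 0 else q' - nth 0 s j
 | 2 => if ee s j then q' - st q s j else st q s j
 | _ => if ee s j then st q s j else q' - st q s j end.

Lemma negqE q' x : x < q' -> negq q' x = if x == 0 then 0 else q' - x.
Proof.
rewrite /negq; case: eqP => [->|nz] h; first by rewrite subn0 modnn.
rewrite modn_small //; lia.
Qed.

Lemma qary_nth q s : 0 < q -> qary q s -> forall j, nth 0 s j < q.
Proof.
move=> q0 /allP hs j; case: (ltnP j (size s)) => hj.
  by apply: hs; apply: mem_nth.
by rewrite nth_default.
Qed.

Lemma st_bound q s j : 0 < q -> qary q s -> 0 < st q s j <= q.
Proof.
move=> q0 hq; have := qary_nth q0 hq j; rewrite /st; case: eqP => h; lia.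
Qed.

Lemma size_U q q' s : size (U_ring q q' s) = 4 * size s.
Proof. rewrite /U_ring !size_cat !size_map size_iota; lia. Qed.

Lemma nthU q q' s b j : 1 < q -> 2 * q + 2 <= q' -> qary q s -> b < 4 -> j < size s ->
  nth 0 (U_ring q q' s) (b * size s + j) = Uf q q' s b j.
Proof.
move=> hq hq' hs hb hj.
have hsj := qary_nth (ltnW hq) hs j.
have hst := st_bound j (ltnW hq) hs.
have ht : nth 0 [seq t_term q q' s i | i <- iota 0 (size s)] j = Uf q q' s 2 j.
  rewrite (nth_map 0) ?size_iota // nth_iota // add0n /t_term /Uf /ee /sgn_mul.
  move: hst; rewrite /st; case: eqP => h0 hst /=; case: ifP => _;
    rewrite ?negqE ?modn_small; try lia; case: eqP => //; lia.
rewrite /U_ring.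
case: b hb => [|[|[|[|b]]]] // _.
- by rewrite mul0n add0n nth_cat hj.
- rewrite mul1n nth_cat ltnNge leq_addr /= addKn nth_cat size_map hj (nth_map 0) //.
  rewrite negqE /Uf; lia.
- rewrite nth_cat ltnNge (_ : size s <= 2 * size s + j) /=; last lia.
  rewrite nth_cat size_map ltnNge (_ : size s <= 2 * size s + j - size s) /=; last lia.
  rewrite nth_cat size_map size_iota (_ : 2 * size s + j - size s - size s = j); last lia.
  by rewrite hj ht.
- rewrite nth_cat ltnNge (_ : size s <= 3 * size s + j) /=; last lia.
  rewrite nth_cat size_map ltnNge (_ : size s <= 3 * size s + j - size s) /=; last lia.
  rewrite nth_cat size_map size_iota ltnNge (_ : size s <= 3 * size s + j - size s - size s) /=; last lia.
  rewrite (nth_map 0) ?size_map ?size_iota (_ : 3 * size s + j - size s - size s - size s = j) //; try lia.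
  rewrite ht /Uf negqE; last by case: ifP; lia.
  have hn1 : (q' - st q s j == 0) = false by apply/eqP; lia.
  have hn2 : (st q s j == 0) = false by apply/eqP; lia.
  case: (ee s j); rewrite ?hn1 ?hn2; lia.
Qed.
Lemma termU q q' s p : 1 < q -> 2 * q + 2 <= q' -> qary q s -> 0 < size s ->
  term (U_ring q q' s) p = Uf q q' s ((p %/ size s) %% 4) (p %% size s).
Proof.
move=> hq hq' hs hm.
rewrite /term size_U modn_divl.
have -> : p %% size s = (p %% (4 * size s)) %% size s.
  by rewrite modn_dvdm // dvdn_mull.
rewrite -nthU //; first by rewrite -divn_eq.
rewrite -modn_divl ltn_mod //.
by rewrite ltn_mod.
Qed.

Lemma Uf_range q q' s b j : 1 < q -> 2 * q + 2 <= q' -> qary q s ->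
  Uf q q' s b j < q' /\ (Uf q q' s b j <= q \/ q' - q <= Uf q q' s b j).
Proof.
move=> hq hq' hs; have := qary_nth (ltnW hq) hs j; have := st_bound j (ltnW hq) hs.
case: b => [|[|[|b]]] /= h1 h2; try lia; try (case: eqP => h; lia); case: ee; lia.
Qed.

Definition fmag q q' u := if u <= q then u %% q else (q' - u) %% q.

Lemma fmag_Uf q q' s b j : 1 < q -> 2 * q + 2 <= q' -> qary q s ->
  fmag q q' (Uf q q' s b j) = nth 0 s j.
Proof.
move=> hq hq' hs; have := qary_nth (ltnW hq) hs j; have := st_bound j (ltnW hq) hs.
rewrite /fmag /st.
case: b => [|[|[|b]]] /=; rewrite /st.
- move=> _ h; rewrite (_ : nth 0 s j <= q) ?modn_small //; lia.
- case: eqP => [->|h0] _ h; first by rewrite mod0n.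
  rewrite ifN; last lia.
  rewrite (_ : q' - (q' - nth 0 s j) = nth 0 s j) ?modn_small //; lia.
- case: eqP => [->|h0] _ h; case: ee.
  + rewrite ifN; last lia. by rewrite (_ : q' - (q' - q) = q) ?modnn //; lia.
  + by rewrite leqnn modnn.
  + rewrite ifN; last lia. rewrite (_ : q' - (q' - nth 0 s j) = nth 0 s j) ?modn_small //; lia.
  + rewrite ifT ?modn_small //; lia.
- case: eqP => [->|h0] _ h; case: ee.
  + by rewrite leqnn modnn.
  + rewrite ifN; last lia. by rewrite (_ : q' - (q' - q) = q) ?modnn //; lia.
  + rewrite ifT ?modn_small //; lia.
  + rewrite ifN; last lia. rewrite (_ : q' - (q' - nth 0 s j) = nth 0 s j) ?modn_small //; lia.
Qed.

Lemma fmag_neg q q' u : 1 < q -> 2 * q + 2 <= q' -> u < q' -> (u <= q \/ q' - q <= u) ->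
  fmag q q' (negq q' u) = fmag q q' u.
Proof.
move=> hq hq' hu hr; rewrite negqE // /fmag.
case: eqP => [->|h0]; first by rewrite leq0n.
case: (leqP u q) => hu2.
  rewrite ifN; last lia.
  by rewrite (_ : q' - (q' - u) = u) //; lia.
rewrite ifT //; lia.
Qed.
Lemma termU' q q' s c j : 1 < q -> 2 * q + 2 <= q' -> qary q s -> j < size s ->
  term (U_ring q q' s) (c * size s + j) = Uf q q' s (c %% 4) j.
Proof.
move=> hq hq' hs hj.
have hm : 0 < size s by lia.
by rewrite termU // divnMDl // divn_small // addn0 modnMDl (modn_small hj).
Qed.

Lemma ee_succ s i : 0 < size s -> ee s (i + 1) = ~~ ee s i.
Proof.
move=> hm; rewrite /ee (_ : i + 1 + size s - 1 = (i + size s - 1).+1) //; lia.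
Qed.

Lemma ee_last s : ee s (size s - 1) = false.
Proof. by rewrite /ee (_ : size s - 1 + size s - 1 = (size s - 1).*2) ?odd_double //; lia. Qed.

Lemma block q q' s n b b' i : 1 < q -> 2 * q + 2 <= q' -> OS q n s -> nth 0 s 0 = 0 ->
  1 < n -> b < 4 -> b' < 4 -> i < size s ->
  (forall k, k < n -> term (U_ring q q' s) (b * size s + i + k) =
                      term (U_ring q q' s) (b' * size s + i + k)) -> b = b'.
Proof.
move=> hq hq' hOS hs0 hn hb hb' hi hk.
have [hs [hm hw] hr] := hOS.
have hsn := qary_nth (ltnW hq) hs.
have TA : forall c k, c < 4 -> i + k < size s ->
    term (U_ring q q' s) (c * size s + i + k) = Uf q q' s c (i + k).
  move=> c k hc hik; rewrite -addnA termU' // modn_small //.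
have TB : forall c, c < 4 ->
    term (U_ring q q' s) (c * size s + i + (size s - i)) = Uf q q' s ((c + 1) %% 4) 0.
  move=> c hc; rewrite (_ : c * size s + i + (size s - i) = (c + 1) * size s + 0); last lia.
  by rewrite termU'.
wlog hlt : b b' hb hb' hk / b < b'.
  move=> H; case: (ltngtP b b') => h; first exact: H.
    by apply/esym/H => // k hkn; rewrite hk.
  by [].
have c01 : ~ (b = 0 /\ b' = 1).
  move=> [eb eb']; subst b b'.
  have Z : forall k, k < n -> i + k < size s -> nth 0 s (i + k) = 0.
    move=> k hkn hik; have := hk k hkn; rewrite !TA // /Uf.
    have := hsn (i + k); case: eqP => // _; lia.
  have [hw1|hw1] : size s - i < n \/ i + n <= size s by lia.
    have := hk _ hw1; rewrite !TB // /Uf /st hs0 eqxx /=.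
    case: ee; lia.
  apply: (hr i i).
  have -> : window s n i = nseq n 0.
    apply: (@eq_from_nth _ 0); first by rewrite size_mkseq size_nseq.
    move=> k; rewrite size_mkseq => hkn.
    rewrite nth_mkseq // nth_nseq hkn /term modn_small; last lia.
    apply: Z => //; lia.
  by rewrite rev_nseq.
exfalso.
have h0 := hk 0 (ltnW hn); rewrite !TA ?addn0 // in h0.
have h1 := hk 1 hn.
have [hi1|hi1] : i + 1 < size s \/ i + 1 = size s by lia.
- rewrite !TA // in h1.
  have he := ee_succ i hm.
  have hsi := hsn i; have hsi1 := hsn (i + 1).
  move: h0 h1; rewrite /Uf /st he.
  case: b b' hb hb' hlt {hk} c01 => [|[|[|[|?]]]] [|[|[|[|?]]]] //= _ _ _ c01.
  all: try (case: (ee s i); case: (nth 0 s i =P 0) => ?; case: (nth 0 s (i + 1) =P 0) => ? /=; lia).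
- have hii : size s - i = 1 by lia.
  rewrite -hii !TB // in h1.
  have hi' : i = size s - 1 by lia.
  have he := ee_last s. rewrite -hi' in he.
  have hsi := hsn i.
  move: h0 h1; rewrite /Uf /st he hs0 eqxx.
  case: b b' hb hb' hlt {hk} c01 => [|[|[|[|?]]]] [|[|[|[|?]]]] //= _ _ _ c01.
  all: try (case: (ee s 0); case: (nth 0 s i =P 0) => ? /=; lia).
Qed.
Lemma window_eqP r r' n i j :
  window r n i = window r' n j <-> forall k, k < n -> term r (i + k) = term r' (j + k).
Proof.
split.
  by move=> h k hk; have := congr1 (nth 0 ^~ k) h; rewrite /window !nth_mkseq.
move=> h; apply: (@eq_from_nth _ 0); first by rewrite !size_mkseq.
by move=> k; rewrite size_mkseq => hk; rewrite !nth_mkseq // h.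
Qed.

Lemma window_negrevP (f : nat -> nat) r r' n i j :
  window r n i = map f (rev (window r' n j)) <->
  forall k, k < n -> term r (i + k) = f (term r' (j + (n - k.+1))).
Proof.
split.
  move=> h k hk; have := congr1 (nth 0 ^~ k) h.
  rewrite /window (nth_map 0) ?size_rev ?size_mkseq // nth_rev ?size_mkseq //.
  rewrite !nth_mkseq //; lia.
move=> h; apply: (@eq_from_nth _ 0); first by rewrite size_map size_rev !size_mkseq.
move=> k; rewrite size_mkseq => hk.
rewrite (nth_map 0) ?size_rev ?size_mkseq // nth_rev ?size_mkseq //.
rewrite !nth_mkseq ?h //; lia.
Qed.

Lemma window_revP r r' n i j :
  window r n i = rev (window r' n j) <->
  forall k, k < n -> term r (i + k) = term r' (j + (n - k.+1)).
Proof. by rewrite -(map_id (rev _)); apply: window_negrevP. Qed.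

Lemma split_sum (l : seq nat) (P Q : pred nat) a b :
  \sum_(x <- l) (if P x then (if Q x then a else b) else 0) =
  a * count (fun x => P x && Q x) l + b * count (fun x => P x && ~~ Q x) l /\
  count P l = count (fun x => P x && Q x) l + count (fun x => P x && ~~ Q x) l.
Proof.
elim: l => [|x l IH]; first by rewrite big_nil /= !muln0.
case: IH => IH1 IH2.
rewrite big_cons /= IH1 IH2; case: (P x); case: (Q x) => /=; constructor; lia.
Qed.

Lemma negsum q' l : all (fun x => x < q') l -> q' %| sumn l + sumn (map (negq q') l).
Proof.
elim: l => [|x l IH] //= /andP [hx hl].
rewrite (_ : x + sumn l + (negq q' x + sumn (map (negq q') l)) =
   (x + negq q' x) + (sumn l + sumn (map (negq q') l))); last lia.
apply: dvdn_add; last exact: IH.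
rewrite negqE //; case: eqP => [->|h] //.
by rewrite (_ : x + (q' - x) = q') //; lia.
Qed.

Definition phi q q' v := if (v == q.+1) || (v == q' - q.+1) then 0 else v.
Theorem theorem4p4 (q q' n : nat) (s U' : seq nat) :
  1 < q -> 1 < n -> (2 * q + 2 <= q')%N ->
  OS q n s -> nth 0 s 0 = 0 ->
  half_replacement q q' (U_ring q q' s) U' ->
  [/\ SOS q' n U', good n U', size U' = size (U_ring q q' s)
    & weight_mod q' U' = 0].
Proof.
move=> hq hn hq' hOS hs0 [hsz [A [huA hA hcnt hU']]].
have [hs [hm hw] hr] := hOS.
have hsn := qary_nth (ltnW hq) hs.
have hUsz : size U' = 4 * size s by rewrite hsz size_U.
have hN : 0 < 4 * size s by lia.
have Urange : forall p, term (U_ring q q' s) p < q' /\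
   (term (U_ring q q' s) p <= q \/ q' - q <= term (U_ring q q' s) p).
  by move=> p; rewrite termU //; apply: Uf_range.
have U'P : forall p,
   (term (U_ring q q' s) p != 0 -> term U' p = term (U_ring q q' s) p) /\
   (term (U_ring q q' s) p = 0 -> term U' p = q.+1 \/ term U' p = q' - q.+1).
  move=> p; rewrite /term hsz hU' ?ltn_mod ?size_U //.
  by split => h; [rewrite h | rewrite h /=; case: (_ \in A); auto].
have phiU : forall p, phi q q' (term U' p) = term (U_ring q q' s) p.
  move=> p; have [h1 h2] := U'P p; have [r1 r2] := Urange p.
  case: (term (U_ring q q' s) p =P 0) => h.
    by rewrite /phi; case: (h2 h) => ->; rewrite eqxx ?orbT.
  rewrite h1; last by apply/eqP.
  rewrite /phi ifN //; apply/norP; split; apply/eqP; lia.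
have phinU : forall p, phi q q' (negq q' (term U' p)) = negq q' (term (U_ring q q' s) p).
  move=> p; have [h1 h2] := U'P p; have [r1 r2] := Urange p.
  case: (term (U_ring q q' s) p =P 0) => h.
    rewrite h /negq subn0 modnn /phi.
    case: (h2 h) => ->; rewrite modn_small; try lia.
      by rewrite (_ : q' - q.+1 == q' - q.+1) ?eqxx ?orbT.
    by rewrite (_ : q' - (q' - q.+1) = q.+1) ?eqxx //; lia.
  rewrite h1; last by apply/eqP.
  rewrite negqE // (negbTE (introN eqP h)) /phi ifN //.
  apply/norP; split; apply/eqP; lia.
have gU : forall p, fmag q q' (phi q q' (term U' p)) = term s p.
  by move=> p; rewrite phiU termU // fmag_Uf.
have gnU : forall p, fmag q q' (phi q q' (negq q' (term U' p))) = term s p.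
  move=> p; have [r1 r2] := Urange p.
  by rewrite phinU fmag_neg // termU // fmag_Uf.
have U'nz : forall p, term U' p != 0.
  move=> p; have [h1 h2] := U'P p.
  case: (term (U_ring q q' s) p =P 0) => h.
    by case: (h2 h) => ->; apply/eqP; lia.
  by rewrite h1; apply/eqP.
have U'lt : forall p, term U' p < q'.
  move=> p; have [h1 h2] := U'P p; have [r1 r2] := Urange p.
  case: (term (U_ring q q' s) p =P 0) => h.
    by case: (h2 h) => ->; lia.
  by rewrite h1 //; apply/eqP.
have red : forall p, p %% (4 * size s) = ((p %/ size s) %% 4) * size s + p %% size s.
  move=> p; rewrite modn_divl {1}(divn_eq (p %% (4 * size s)) (size s)).
  by rewrite modn_dvdm // dvdn_mull.
have tred : forall p k, term (U_ring q q' s) (p + k) =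
    term (U_ring q q' s) (((p %/ size s) %% 4) * size s + p %% size s + k).
  by move=> p k; rewrite /term size_U -red modnDml.
split.
- split; last first.
    move=> i j; rewrite window_negrevP => h.
    apply: (hr i j); apply/window_revP => k hk.
    by rewrite -gU h // gnU.
  split.
  + apply/(all_nthP 0) => x hx.
    have := U'lt x; rewrite /term (modn_small hx) //.
  + split; first by rewrite hUsz.
    move=> i j /window_eqP h.
    have hs' : window s n i = window s n j.
      by apply/window_eqP => k hk; rewrite -!gU h.
    have hij := hw _ _ hs'.
    rewrite hUsz red [j %% _]red hij.
    congr (_ * _ + _).
    apply: (@block q q' s n _ _ (j %% size s)) => //; rewrite ?ltn_mod //.
    move=> k hk; rewrite -{1}hij -tred -tred -!phiU h //.
  + move=> i j /window_revP h.
    apply: (hr i j); apply/window_revP => k hk.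
    by rewrite -!gU h.
- move=> i; rewrite /window.
  case: n hn {hOS hw hr} => [|[|n]] // _ /=.
  by rewrite addn0 (negbTE (U'nz i)).
- by [].
- rewrite /weight_mod /weight.
  set U := U_ring q q' s.
  set N := size U.
  have e1 : sumn U' = \sum_(0 <= x < N) nth 0 U' x.
    by rewrite sumnE (big_nth 0) hsz.
  have e2 : \sum_(0 <= x < N) nth 0 U' x = \sum_(0 <= x < N) nth 0 U x +
     \sum_(0 <= x < N) (if nth 0 U x == 0 then (if x \in A then q.+1 else q' - q.+1) else 0).
    rewrite -big_split; apply: eq_big_nat => x hx.
    rewrite hU'; last by case/andP: hx.
    case: (nth 0 U x =P 0) => h; first by rewrite h.
    by rewrite /= addn0.
  have e3 : sumn U = \sum_(0 <= x < N) nth 0 U x by rewrite sumnE (big_nth 0).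
  have [e4 e5] := split_sum (index_iota 0 N) (fun x => nth 0 U x == 0) (fun x => x \in A)
     q.+1 (q' - q.+1).
  have cz : count (fun x => x == 0) U = count (fun x => nth 0 U x == 0) (index_iota 0 N).
    by rewrite /index_iota subn0 -{1}(mkseq_nth 0 U) /mkseq count_map.
  have cA : count (fun x => (nth 0 U x == 0) && (x \in A)) (index_iota 0 N) = size A.
    rewrite -size_filter; apply/perm_size/uniq_perm => //.
      by rewrite filter_uniq // /index_iota iota_uniq.
    move=> x; rewrite mem_filter /index_iota subn0 mem_iota /=.
    apply/idP/idP; first by case/andP => /andP [_ ->].
    by move=> xa; have [h1 h2] := hA x xa; rewrite xa h2 eqxx h1.
  have hsU : q' %| sumn U.
    rewrite /U /U_ring !sumn_cat addnA; apply: dvdn_add.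
      apply: negsum; apply/allP => x xs.
      by have := (allP hs) x xs => h; lia.
    apply: negsum; apply/allP => x /mapP [j _ ->].
    rewrite /t_term /sgn_mul; case: ifP => _; case: ifP => _; rewrite ?ltn_mod /negq ?ltn_mod //; lia.
  have -> : sumn U' = sumn U + size A * q'.
    rewrite e1 e2 -e3 e4 cA.
    have : count (fun x => (nth 0 U x == 0) && ~~ (x \in A)) (index_iota 0 N) = size A.
      by move: hcnt e5; rewrite cz cA -addnn; lia.
    move=> ->; rewrite -mulnDl (_ : q.+1 + (q' - q.+1) = q'); last lia.
    by rewrite mulnC.
  by rewrite addnC modnMDl; apply/eqP.
Qed.
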